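(* Let $v\in M_N(\mathbb{C})$ and let $g(t)=e^{tv}$, $t\in[0,1]$. Then $g$ is an extremal of the $p$-energy functional, i.e. its left-translated velocity $g^{-1}(t)\dot g(t)$ satisfies the Euler–Lagrange equation $$\frac{d}{dt}\, v(t)(v(t)^*v(t))^{n-1}=(v(t)^*v(t))^n-(v(t)v(t)^* )^n,\qquad v(t)=g^{-1}(t)\dot g(t),$$ if and only if $v$ is normal, i.e. $vv^*=v^*v$.
   Context: $p=2n\ge 2$ is a fixed even integer. $G=GL(N)$ is the group of invertible complex $N\times N$ matrices, an open subset of $\mathcal A=M_N(\mathbb C)$. $\tau(x)=\frac1N\operatorname{Re}\operatorname{Tr}(x)$ is the normalized real part of the trace, $|x|=(x^*x)^{1/2}$, and $\|x\|_p=\tau(|x|^p)^{1/p}$. For a smooth curve $g:[0,1]\to G$, the $p$-energy is $\mathcal E_p(g)=\int_0^1\tau\big((v^*v)^n\big)\,dt$ with $v=g^{-1}\dot g$; the displayed Euler–Lagrange equation is the condition for $g$ to be a critical point of $\mathcal E_p$ under variations with fixed endpoints. *)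

(* Defs.v *)
From mathcomp Require Import all_boot all_algebra.
From mathcomp Require Import all_classical all_reals all_analysis.
From mathcomp Require Import complex.
Import GRing.Theory Num.Theory.
Import numFieldNormedType.Exports.
Local Open Scope classical_set_scope.
Local Open Scope ring_scope.

Set Implicit Arguments.
Unset Strict Implicit.
Unset Printing Implicit Defensive.

Definition rC (R : realType) (t : R) : R[i] := Complex t 0.

Definition mx_adj (R : realType) (N : nat) (A : 'M[R[i]]_N) : 'M[R[i]]_N :=
  map_mx (fun z : R[i] => z^*) A^T.

(* matrix power A^k (works for every N, including N = 0) *)
Definition mxpow (R : realType) (N : nat) (A : 'M[R[i]]_N) (k : nat) : 'M[R[i]]_N :=
  iter k (mulmx A) 1%:M.

Definition mexp_partial (R : realType) (N : nat) (A : 'M[R[i]]_N) (m : nat)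
  : 'M[R[i]]_N :=
  \sum_(k < m) (k`!%:R)^-1 *: mxpow A k.

Definition is_mxexp (R : realType) (N : nat) (A E : 'M[R[i]]_N) : Prop :=
  forall i j,
    (fun m => complex.Re (mexp_partial A m i j)) @ \oo --> complex.Re (E i j) /\
    (fun m => complex.Im (mexp_partial A m i j)) @ \oo --> complex.Im (E i j).

Definition mx_deriv (R : realType) (N : nat) (f : R -> 'M[R[i]]_N) (t : R)
  (D : 'M[R[i]]_N) : Prop :=
  forall i j,
    is_derive t 1 (fun s => complex.Re (f s i j)) (complex.Re (D i j)) /\
    is_derive t 1 (fun s => complex.Im (f s i j)) (complex.Im (D i j)).

Definition EL_lhs (R : realType) (N : nat) (n : nat) (w : 'M[R[i]]_N) : 'M[R[i]]_N :=
  w *m mxpow (mx_adj w *m w) n.-1.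

Definition EL_rhs (R : realType) (N : nat) (n : nat) (w : 'M[R[i]]_N) : 'M[R[i]]_N :=
  mxpow (mx_adj w *m w) n - mxpow (w *m mx_adj w) n.

(* g satisfies the Euler-Lagrange equation of the p-energy (p = 2n) on [0,1]:
   g is differentiable (with derivative gdot), v(t) = g(t)^{-1} gdot(t), and
   d/dt [v(t) (adj(v t) v(t))^(n-1)] exists and equals
   (adj(v t) v(t))^n - (v(t) adj(v t))^n for every t in [0,1]. *)
Definition satisfies_EL (R : realType) (N : nat) (n : nat)
  (g : R -> 'M[R[i]]_N) : Prop :=
  exists gdot : R -> 'M[R[i]]_N,
    (forall t, mx_deriv g t (gdot t)) /\
    forall t : R, 0 <= t <= 1 ->
      mx_deriv (fun s => EL_lhs n (invmx (g s) *m gdot s)) t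
               (EL_rhs n (invmx (g t) *m gdot t)).

(* Main.v *)
Require Import Defs.
From mathcomp Require Import all_boot all_algebra.
From mathcomp Require Import all_classical all_reals all_analysis.
From mathcomp Require Import complex.
From mathcomp Require Import sesquilinear spectral.
Import GRing.Theory Num.Theory.
Import numFieldNormedType.Exports.
Local Open Scope ring_scope.
Section Alg.
Variable C : numClosedFieldType.
Variable N : nat.
Local Open Scope sesquilinear_scope.
Implicit Types (M A B : 'M[C]_N) (x y z w : 'rV[C]_N).

Lemma adjM m n p (X : 'M[C]_(m, n)) (Y : 'M[C]_(n, p)) :
  (X *m Y)^t* = Y^t* *m X^t*.
Proof. by rewrite trmx_mul map_mxM. Qed.

Lemma qf_ge0 w : 0 <= (w *m w^t*) 0 0.
Proof.
rewrite !mxE; apply: sumr_ge0 => k _; rewrite !mxE; exact: mul_conjC_ge0.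
Qed.

Lemma qf_eq0 w : (w *m w^t*) 0 0 = 0 -> w = 0.
Proof.
rewrite !mxE => /psumr_eq0P H; apply/rowP => k; rewrite mxE.
have := H (fun i _ => ltac:(rewrite !mxE; exact: mul_conjC_ge0)) k isT; rewrite !mxE => /eqP.
by rewrite mul_conjC_eq0 => /eqP.
Qed.

Lemma herm_pow M k : (M *m M^t*) ^+ k ^t* = (M *m M^t*) ^+ k.
Proof.
elim: k => [|k IH].
  rewrite !expr0 trmx1 map_mx1. reflexivity.
by rewrite exprS -mulmxE adjM IH adjM trmxCK mulmxE -exprSr exprS.
Qed.

Lemma one_mxE : (1 : 'M[C]_N) = 1%:M. Proof. by []. Qed.

Lemma adjB M : (M *m M^t*)^t* = M *m M^t*.
Proof. by rewrite adjM trmxCK. Qed.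

Lemma pos_pow M k z : 0 <= (z *m ((M *m M^t*) ^+ k) *m z^t*) 0 0.
Proof.
elim/ltn_ind: k z => k IH z.
case: k IH => [|[|k]] IH.
- by rewrite expr0 one_mxE mulmx1 qf_ge0.
- rewrite expr1.
  have -> : z *m (M *m M^t*) *m z^t* = (z *m M) *m (z *m M)^t*.
    by rewrite adjM !mulmxA.
  exact: qf_ge0.
- rewrite exprS exprSr -!mulmxE !mulmxA.
  have := IH k (leqW (leqnn _)) (z *m (M *m M^t*)).
  by rewrite adjM adjB !mulmxA.
Qed.

Lemma trip x P Q : x *m P *m (Q *m x^t*) = x *m (P * Q) *m x^t*.
Proof. by rewrite -mulmxE !mulmxA. Qed.

Lemma scalar_pow (a : C) k : (a%:M : 'M[C]_N) ^+ k = (a ^+ k)%:M.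
Proof.
elim: k => [|k IH]; first by rewrite !expr0.
by rewrite exprS IH -mulmxE -scalar_mxM -exprS.
Qed.

Lemma root_vec M x (a : C) n : (0 < n)%N -> 0 <= a ->
  x *m (M *m M^t*) ^+ n = a ^+ n *: x -> x *m (M *m M^t*) = a *: x.
Proof.
move=> n0 a0; set B := M *m M^t* => hx.
have [a0E|an0] := eqVneq a 0.
  rewrite a0E scale0r; move: hx; rewrite a0E expr0n /= eqn0Ngt n0 /= scale0r.
  case: n n0 => // n _.
  elim: n => [|n IH] h; first by rewrite expr1 in h.
  apply: IH; apply: qf_eq0.
  have -> : x *m B ^+ n.+1 *m (x *m B ^+ n.+1)^t* =
            (x *m B ^+ n.+2) *m (B ^+ n *m x^t*).
    rewrite adjM herm_pow !trip -!exprD.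
    by rewrite !addSn !addnS.
  by rewrite h mul0mx mxE.
set y := x *m B - a *: x.
have yQ : y *m \sum_(i < n) (B ^+ (n.-1 - i) * (a%:M) ^+ i) = 0.
  have -> : y = x *m (B - a%:M) by rewrite mulmxBr mul_mx_scalar.
  rewrite -mulmxA mulmxE -subrXX_comm; last exact: scalar_mxC.
  by rewrite mulmxBr hx scalar_pow mul_mx_scalar subrr.
have : (y *m (\sum_(i < n) (B ^+ (n.-1 - i) * (a%:M) ^+ i)) *m y^t*) 0 0 =
       \sum_(i < n) a ^+ i * (y *m B ^+ (n.-1 - i) *m y^t*) 0 0.
  rewrite mulmx_sumr mulmx_suml summxE; apply: eq_bigr => i _.
  by rewrite scalar_pow -mulmxE mul_mx_scalar -scalemxAr -scalemxAl mxE.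
rewrite yQ mul0mx mxE => /esym /psumr_eq0P H.
have n1 : (n.-1 < n)%N by rewrite prednK.
have := H (fun i _ => mulr_ge0 (exprn_ge0 _ a0) (pos_pow _ _ _)) (Ordinal n1) isT.
rewrite /= subnn expr0 one_mxE mulmx1 => /eqP.
rewrite mulf_eq0 expf_eq0 (negbTE an0) andbF /= => /eqP /qf_eq0 /eqP.
by rewrite subr_eq0 => /eqP.
Qed.

Lemma normal_of_pow (v : 'M[C]_N) n : (0 < n)%N ->
  (v^t* *m v) ^+ n = (v *m v^t*) ^+ n -> v *m v^t* = v^t* *m v.
Proof.
move=> n0 hpow.
set A := v^t* *m v.
have Anorm : A \is normalmx by apply/normalmxP; rewrite /A adjM trmxCK.
have /orthomx_spectralP eqA := Anorm.
set P := spectralmx A in eqA; set d := spectral_diag A in eqA.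
have Pu : P \is unitarymx := spectral_unitarymx A.
have Pi : P \in unitmx := spectral_unit A.
have PA : P *m A = diag_mx d *m P.
  by rewrite {1}eqA !mulmxA mulmxV // mul1mx.
have rowi : forall i, row i P *m A = d 0 i *: row i P.
  by move=> i; rewrite -row_mul PA row_mul row_diag_mx -scalemxAl -rowE.
have dge0 : forall i, 0 <= d 0 i.
  move=> i; set x := row i P.
  have /row_unitarymxP Ho := Pu.
  have h1 : (x *m A *m x^t*) 0 0 = d 0 i.
    have := Ho i i; rewrite dotmxE eqxx => hx.
    by rewrite rowi -scalemxAl mxE hx mulr1.
  have h2 : (x *m A *m x^t*) = (x *m v^t*) *m (x *m v^t*)^t*.
    by rewrite adjM trmxCK /A !mulmxA.
  rewrite -h1 h2; exact: qf_ge0.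
have rowB : forall i, row i P *m (v *m v^t*) = row i P *m A.
  move=> i; rewrite rowi; apply: root_vec n0 (dge0 i) _.
  rewrite -hpow.
  elim: (n) => [|k IH]; first by rewrite expr0 one_mxE mulmx1 expr0 scale1r.
  by rewrite exprSr -mulmxE mulmxA IH -scalemxAl rowi scalerA -exprSr.
have PB : P *m (v *m v^t*) = P *m A.
  by apply/row_matrixP => i; rewrite !row_mul rowB.
by rewrite -[v *m v^t*](mulKmx Pi) PB mulKmx.
Qed.

End Alg.
From mathcomp Require Import ring.
Local Open Scope classical_set_scope.
Local Open Scope ring_scope.

Section Ana.
Variable R : realType.
Local Notation C := R[i].
Local Notation Re := (@complex.Re R).
Local Notation Im := (@complex.Im R).

Lemma cvg_sumR (I : Type) (r : seq I) (u : I -> nat -> R) (l : I -> R) :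
  (forall i, u i @ \oo --> l i) ->
  (fun n => \sum_(i <- r) u i n) @ \oo --> \sum_(i <- r) l i.
Proof.
move=> H; elim: r => [|a r IH].
  rewrite big_nil; under eq_cvg do rewrite big_nil; exact: cvg_cst.
rewrite big_cons; under eq_cvg do rewrite big_cons; exact: cvgD.
Qed.

Lemma cplx_eq (z w : C) : Re z = Re w -> Im z = Im w -> z = w.
Proof. by case: z => a b; case: w => c d /= -> ->. Qed.

Lemma ReD (x y : C) : Re (x + y) = Re x + Re y.
Proof. by case: x => a b; case: y => c d. Qed.
Lemma ImD (x y : C) : Im (x + y) = Im x + Im y.
Proof. by case: x => a b; case: y => c d. Qed.
Lemma ReS (r : R) (z : C) : Re (rC r * z) = r * Re z.
Proof. by case: z => a b /=; ring. Qed.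
Lemma ImS (r : R) (z : C) : Im (rC r * z) = r * Im z.
Proof. by case: z => a b /=; ring. Qed.
Lemma rCM (a b : R) : rC a * rC b = rC (a * b).
Proof. by apply: cplx_eq => /=; ring. Qed.
Lemma rC1 : rC (1 : R) = 1. Proof. by []. Qed.
Lemma rC0 : rC (0 : R) = 0. Proof. by []. Qed.
Lemma rCX (a : R) k : rC a ^+ k = rC (a ^+ k).
Proof. by elim: k => [|k IH]; rewrite ?expr0 // !exprS IH rCM. Qed.
Lemma rC_natinv m : ((m%:R : C)^-1) = rC ((m%:R)^-1).
Proof.
have -> : rC ((m%:R)^-1) = real_complex R ((m%:R)^-1) by [].
by rewrite fmorphV rmorph_nat.
Qed.
Lemma cplxE (a b : R) : Complex a b = rC a + Complex 0 1 * rC b.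
Proof. by apply: cplx_eq => /=; ring. Qed.

Section Phi.
Variable phi : C -> R.
Hypothesis phiD : forall x y, phi (x + y) = phi x + phi y.
Hypothesis phiS : forall r z, phi (rC r * z) = r * phi z.

Lemma phi0 : phi 0 = 0.
Proof. by have := phiS 0 0; rewrite mul0r mul0r. Qed.

Lemma phi_sum (I : Type) (r : seq I) (F : I -> C) :
  phi (\sum_(i <- r) F i) = \sum_(i <- r) phi (F i).
Proof.
elim: r => [|a r IH]; first by rewrite !big_nil phi0.
by rewrite !big_cons phiD IH.
Qed.

Lemma phi_mul (z c : C) : phi (z * c) = Re z * phi c + Im z * phi (Complex 0 1 * c).
Proof.
by case: z => a b; rewrite {1}cplxE mulrDl phiD phiS -mulrA mulrCA phiS.
Qed.

Variable N : nat.
Variable v : 'M[C]_N.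
Variable g : R -> 'M[C]_N.
Hypothesis hg : forall t : R, is_mxexp (rC t *: v) (g t).

Lemma L1 (S : nat -> 'M[C]_N) (G : 'M[C]_N) :
  (forall i j, (fun m => Re (S m i j)) @ \oo --> Re (G i j) /\
               (fun m => Im (S m i j)) @ \oo --> Im (G i j)) ->
  forall (P Q : 'M[C]_N) i j,
    (fun m => phi ((P *m S m *m Q) i j)) @ \oo --> phi ((P *m G *m Q) i j).
Proof.
move=> HS P Q i j.
have E : forall X : 'M[C]_N, phi ((P *m X *m Q) i j) =
   \sum_b \sum_a (Re (X a b) * phi (P i a * Q b j) +
                  Im (X a b) * phi (Complex 0 1 * (P i a * Q b j))).
  move=> X; rewrite mxE phi_sum; apply: eq_bigr => b _.
  rewrite mxE mulr_suml phi_sum; apply: eq_bigr => a _.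
  by rewrite mulrAC [_ * X a b]mulrC; apply: phi_mul.
under eq_cvg do rewrite E.
rewrite E.
apply: cvg_sumR => b; apply: cvg_sumR => a; apply: cvgD; apply: cvgMl.
  exact: (HS a b).1.
exact: (HS a b).2.
Qed.

End Phi.

Lemma mxpowE N (A : 'M[C]_N) k : mxpow A k = A ^+ k.
Proof. by elim: k => [|k IH] //; rewrite exprS -IH -mulmxE. Qed.

Lemma scale_pow N (c : C) (A : 'M[C]_N) k : (c *: A) ^+ k = c ^+ k *: A ^+ k.
Proof.
elim: k => [|k IH]; first by rewrite !expr0 scale1r.
by rewrite !exprS IH -!mulmxE -scalemxAl -scalemxAr scalerA.
Qed.

End Ana.

Section Ana2.
Variable R : realType.
Local Notation C := R[i].
Local Notation Re := (@complex.Re R).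
Local Notation Im := (@complex.Im R).
Variable phi : C -> R.
Hypothesis phiD : forall x y, phi (x + y) = phi x + phi y.
Hypothesis phiS : forall r z, phi (rC r * z) = r * phi z.
Variable N : nat.
Variable v : 'M[C]_N.
Variable g : R -> 'M[C]_N.
Hypothesis hg : forall t : R, is_mxexp (rC t *: v) (g t).

Definition cf (W : 'M[C]_N) i j (k : nat) : R :=
  phi (((k`!%:R)^-1 *: (v ^+ k *m W)) i j).

Lemma series_eq W i j t m :
  pseries (cf W i j) t m = phi ((mexp_partial (rC t *: v) m *m W) i j).
Proof.
rewrite /pseries /series /= big_mkord /mexp_partial mulmx_suml summxE.
rewrite (@phi_sum R phi phiD phiS); apply: eq_bigr => k _.
rewrite mxpowE scale_pow -!scalemxAl !mxE rCX rC_natinv /cf !mxE rC_natinv.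
by rewrite [rC _ * (rC _ * _)]mulrCA (phiS (t ^+ k)) mulrC.
Qed.

Lemma cvg_ps W i j t : pseries (cf W i j) t @ \oo --> phi ((g t *m W) i j).
Proof.
have -> : pseries (cf W i j) t =
    (fun m => phi ((1%:M *m mexp_partial (rC t *: v) m *m W) i j)).
  by apply/funext => m; rewrite series_eq mul1mx.
rewrite -[g t]mul1mx; apply: (@L1 R phi phiD phiS); exact: hg.
Qed.

Lemma diffs W i j : pseries_diffs (cf W i j) = cf (v *m W) i j.
Proof.
apply/funext => k; rewrite /pseries_diffs /cf exprSr -mulmxE -mulmxA.
rewrite !mxE !rC_natinv !phiS mulrA; congr (_ * _).
by rewrite factS natrM invfM mulrA mulfV ?mul1r // pnatr_eq0.
Qed.

Lemma gE i j : (fun s => phi (g s i j)) = fun s => limn (pseries (cf 1%:M i j) s).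
Proof.
apply/funext => s; have h := cvg_ps 1%:M i j s; rewrite mulmx1 in h.
by rewrite (cvg_lim _ h).
Qed.

Lemma deriv_phi (i j : 'I_N) (t : R) :
  is_derive t 1 (fun s => phi (g s i j)) (phi ((g t *m v) i j)).
Proof.
rewrite gE.
have -> : phi ((g t *m v) i j) = limn (pseries (pseries_diffs (cf 1%:M i j)) t).
  have h := cvg_ps v i j t; rewrite diffs mulmx1.
  by rewrite (cvg_lim _ h).
have K0 : 0 <= `|t| + 1 by rewrite addr_ge0.
apply: (@pseries_snd_diffs _ _ (`|t| + 1)).
- by apply/cvg_ex; eexists; exact: cvg_ps.
- by rewrite diffs; apply/cvg_ex; eexists; exact: cvg_ps.
- by rewrite !diffs; apply/cvg_ex; eexists; exact: cvg_ps.
- by rewrite (ger0_norm K0) ltrDl.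
Qed.

End Ana2.

Section Ana3.
Variable R : realType.
Local Notation C := R[i].
Local Notation Re := (@complex.Re R).
Local Notation Im := (@complex.Im R).

Definition cd (f : R -> C) (t : R) (F : C) :=
  is_derive t 1 (fun s => Re (f s)) (Re F) /\
  is_derive t 1 (fun s => Im (f s)) (Im F).

Lemma cdD f h t F H : cd f t F -> cd h t H -> cd (fun s => f s + h s) t (F + H).
Proof.
move=> [f1 f2] [h1 h2]; split.
  have -> : (fun s => Re (f s + h s)) = (fun s => Re (f s)) + (fun s => Re (h s)).
    by apply/funext => s; rewrite ReD.
  rewrite ReD; exact: is_deriveD.
have -> : (fun s => Im (f s + h s)) = (fun s => Im (f s)) + (fun s => Im (h s)).
  by apply/funext => s; rewrite ImD.
rewrite ImD; exact: is_deriveD.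
Qed.

Lemma cd_cst (c : C) t : cd (fun _ => c) t 0.
Proof. by split; exact: is_derive_cst. Qed.

Lemma cd_sum (I : Type) (r : seq I) (u : I -> R -> C) (U : I -> C) t :
  (forall l, cd (u l) t (U l)) ->
  cd (fun s => \sum_(l <- r) u l s) t (\sum_(l <- r) U l).
Proof.
move=> H; elim: r => [|a r IH].
  have -> : (fun s => \sum_(l <- [::]) u l s) = fun _ => 0.
    by apply/funext => s; rewrite big_nil.
  rewrite big_nil; exact: cd_cst.
have -> : (fun s => \sum_(l <- a :: r) u l s) =
          fun s => u a s + \sum_(l <- r) u l s.
  by apply/funext => s; rewrite big_cons.
rewrite big_cons; exact: cdD.
Qed.

Lemma cdM f h t F H : cd f t F -> cd h t H ->
  cd (fun s => f s * h s) t (F * h t + f t * H).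
Proof.
move=> [f1 f2] [h1 h2]; split.
  have -> : (fun s => Re (f s * h s)) =
     (fun s => Re (f s)) * (fun s => Re (h s)) -
     (fun s => Im (f s)) * (fun s => Im (h s)).
    apply/funext => s; have E : Re (f s * h s) = Re (f s) * Re (h s) - Im (f s) * Im (h s).
      by case: (f s) => a b; case: (h s) => c d.
    exact: E.
  have K := is_deriveB (is_deriveM f1 h1) (is_deriveM f2 h2).
  apply: (is_derive_eq K); clear K f1 f2 h1 h2.
  rewrite /GRing.scale /=.
  by case: F => a b; case: H => c d; case: (f t) => a' b'; case: (h t) => c' d' /=; ring.
have -> : (fun s => Im (f s * h s)) =
   (fun s => Re (f s)) * (fun s => Im (h s)) +
   (fun s => Im (f s)) * (fun s => Re (h s)).
  apply/funext => s; have E : Im (f s * h s) = Re (f s) * Im (h s) + Im (f s) * Re (h s).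
    by case: (f s) => a b; case: (h s) => c d /=; ring.
  exact: E.
have K := is_deriveD (is_deriveM f1 h2) (is_deriveM f2 h1).
apply: (is_derive_eq K); clear K f1 f2 h1 h2.
rewrite /GRing.scale /=.
by case: F => a b; case: H => c d; case: (f t) => a' b'; case: (h t) => c' d' /=; ring.
Qed.

End Ana3.
Arguments cd {R}.

Section Ana4.
Variable R : realType.
Local Notation C := R[i].
Local Notation Re := (@complex.Re R).
Local Notation Im := (@complex.Im R).
Variable N : nat.

Lemma cdN (f : R -> C) t F : cd f (- t) F -> cd (fun s => f (- s)) t (- F).
Proof.
move=> [f1 f2]; split.
  have K := is_derive1_comp f1 (is_deriveNid t 1).
  apply: (is_derive_eq K); clear K f1 f2.
  by case: F => a b /=; rewrite mulrN1.
have K := is_derive1_comp f2 (is_deriveNid t 1).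
apply: (is_derive_eq K); clear K f1 f2.
by case: F => a b /=; rewrite mulrN1.
Qed.

Lemma mxd_mul (f1 f2 : R -> 'M[C]_N) t F1 F2 :
  mx_deriv f1 t F1 -> mx_deriv f2 t F2 ->
  mx_deriv (fun s => f1 s *m f2 s) t (F1 *m f2 t + f1 t *m F2).
Proof.
move=> H1 H2 i j.
suff : cd (fun s => (f1 s *m f2 s) i j) t ((F1 *m f2 t + f1 t *m F2) i j) by [].
have -> : (fun s => (f1 s *m f2 s) i j) = (fun s => \sum_l f1 s i l * f2 s l j).
  by apply/funext => s; rewrite mxE.
rewrite !mxE -big_split /=.
have K := @cd_sum R 'I_N (index_enum 'I_N) (fun l s => f1 s i l * f2 s l j)
   (fun l => F1 i l * f2 t l j + f1 t i l * F2 l j) t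
   (fun l => @cdM R _ _ _ _ _ (H1 i l) (H2 l j)).
exact: K.
Qed.

Lemma mxdN (f : R -> 'M[C]_N) t F :
  mx_deriv f (- t) F -> mx_deriv (fun s => f (- s)) t (- F).
Proof.
move=> H i j.
suff : cd (fun s => f (- s) i j) t ((- F) i j) by [].
rewrite mxE; apply: (@cdN (fun x => f x i j)); exact: H.
Qed.

Lemma mxd_cst (c : 'M[C]_N) t : mx_deriv (fun _ : R => c) t 0.
Proof.
move=> i j.
suff : cd (fun _ => c i j) t ((0 : 'M[C]_N) i j) by [].
rewrite mxE; exact: cd_cst.
Qed.

Lemma mxd_uniq (f : R -> 'M[C]_N) t D1 D2 :
  mx_deriv f t D1 -> mx_deriv f t D2 -> D1 = D2.
Proof.
move=> H1 H2; apply/matrixP => i j.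
have [a1 b1] := H1 i j; have [a2 b2] := H2 i j.
apply: cplx_eq.
  by rewrite -(@derive_val _ _ _ _ _ _ _ a1) -(@derive_val _ _ _ _ _ _ _ a2).
by rewrite -(@derive_val _ _ _ _ _ _ _ b1) -(@derive_val _ _ _ _ _ _ _ b2).
Qed.

Lemma mxd0_cst (f : R -> 'M[C]_N) :
  (forall t, mx_deriv f t 0) -> forall s, f s = f 0.
Proof.
move=> H s; apply/matrixP => i j; apply: cplx_eq.
  apply: (@is_derive_0_is_cst _ (fun s => Re (f s i j))) => x; have := (H x i j).1; rewrite mxE; exact.
apply: (@is_derive_0_is_cst _ (fun s => Im (f s i j))) => x; have := (H x i j).2; rewrite mxE; exact.
Qed.

Variable v : 'M[C]_N.
Variable g : R -> 'M[C]_N.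
Hypothesis hg : forall t : R, is_mxexp (rC t *: v) (g t).

Lemma deriv_g t : mx_deriv g t (g t *m v).
Proof.
move=> i j; split.
  exact: (@deriv_phi R _ (@ReD R) (@ReS R) N v g hg i j t).
exact: (@deriv_phi R _ (@ImD R) (@ImS R) N v g hg i j t).
Qed.

Lemma S_comm t m :
  mexp_partial (rC t *: v) m *m v = v *m mexp_partial (rC t *: v) m.
Proof.
rewrite /mexp_partial mulmx_suml mulmx_sumr; apply: eq_bigr => k _.
rewrite mxpowE scale_pow -!scalemxAl -!scalemxAr.
by congr (_ *: (_ *: _)); rewrite mulmxE -exprSr exprS.
Qed.

Lemma g_comm t : g t *m v = v *m g t.
Proof.
apply/matrixP => i j.
have key : forall phi : C -> R, (forall x y, phi (x + y) = phi x + phi y) ->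
    (forall r z, phi (rC r * z) = r * phi z) ->
    phi ((g t *m v) i j) = phi ((v *m g t) i j).
  move=> phi pD pS.
  have e1 := @L1 R phi pD pS N _ _ (hg t) 1%:M v i j.
  have e2 := @L1 R phi pD pS N _ _ (hg t) v 1%:M i j.
  have Eseq : (fun m => phi ((1%:M *m mexp_partial (rC t *: v) m *m v) i j)) =
              (fun m => phi ((v *m mexp_partial (rC t *: v) m *m 1%:M) i j)).
    by apply/funext => m; rewrite mul1mx mulmx1 S_comm.
  have e1' : (fun m => phi ((v *m mexp_partial (rC t *: v) m *m 1%:M) i j))
       @ \oo --> phi ((1%:M *m g t *m v) i j) by rewrite -Eseq; exact: e1.
  have H : phi ((1%:M *m g t *m v) i j) = phi ((v *m g t *m 1%:M) i j).
    exact: (cvg_unique _ e1' e2).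
  by move: H; rewrite mul1mx mulmx1.
apply: cplx_eq; [apply: key; [exact: ReD|exact: ReS] |
                 apply: key; [exact: ImD|exact: ImS]].
Qed.

Lemma S_one m : mexp_partial (rC 0 *: v) m.+1 = 1%:M.
Proof.
rewrite /mexp_partial big_ord_recl big1 ?addr0.
  by rewrite fact0 invr1 scale1r.
move=> k _; rewrite mxpowE rC0 scale0r expr0n /=.
by rewrite ?mulr0n scaler0.
Qed.

Lemma g0 : g 0 = 1%:M.
Proof.
apply/matrixP => i j; have [h1 h2] := hg 0 i j.
apply: cplx_eq.
  have E : (fun m => Re (mexp_partial (rC 0 *: v) m.+1 i j)) =
           fun _ => Re ((1%:M : 'M[C]_N) i j).
    by apply/funext => m; rewrite S_one.
  have e : (fun m => Re (mexp_partial (rC 0 *: v) m.+1 i j)) @ \oo -->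
            Re (g 0 i j) by rewrite -cvg_shiftS in h1; exact: h1.
  rewrite E in e; exact: (cvg_unique _ e (cvg_cst _)).
have E : (fun m => Im (mexp_partial (rC 0 *: v) m.+1 i j)) =
         fun _ => Im ((1%:M : 'M[C]_N) i j).
  by apply/funext => m; rewrite S_one.
have e : (fun m => Im (mexp_partial (rC 0 *: v) m.+1 i j)) @ \oo -->
          Im (g 0 i j) by rewrite -cvg_shiftS in h2; exact: h2.
rewrite E in e; exact: (cvg_unique _ e (cvg_cst _)).
Qed.

Lemma g_unit t : g t \in unitmx.
Proof.
set h := fun s => g s *m g (- s).
have hd : forall x, mx_deriv h x 0.
  move=> x; have K := @mxd_mul _ _ _ _ _ (deriv_g x) (@mxdN _ _ _ (deriv_g (- x))).
  cbv beta in K.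
  rewrite (g_comm (- x)) mulmxN mulmxA subrr in K; exact: K.
have hc := @mxd0_cst _ hd t.
have : g t *m g (- t) = 1%:M.
  by move: hc; rewrite /h oppr0 g0 mul1mx.
by case/mulmx1_unit.
Qed.

End Ana4.


Theorem mainTheorem1 (R : realType) (N n : nat) (hn : (0 < n)%N)
  (v : 'M[R[i]]_N) (g : R -> 'M[R[i]]_N)
  (hg : forall t : R, is_mxexp (rC t *: v) (g t)) :
  satisfies_EL n g <-> v *m mx_adj v = mx_adj v *m v.
Proof.
have dg := @deriv_g R N v g hg.
have gu := @g_unit R N v g hg.
have vt : forall s, invmx (g s) *m (g s *m v) = v by move=> s; rewrite mulKmx.
split.
- move=> [gdot [Hd Hel]].
  have gdE : forall t, gdot t = g t *m v.
    by move=> t; exact: (@mxd_uniq R N g t _ _ (Hd t) (dg t)).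
  have h01 : (0:R) <= 0 <= (1:R) by rewrite ler01 andbT.
  have := Hel 0 h01.
  have -> : (fun s => EL_lhs n (invmx (g s) *m gdot s)) = fun _ => EL_lhs n v.
    by apply/funext => s; rewrite gdE vt.
  rewrite gdE vt => H.
  have := @mxd_uniq R N _ 0 _ _ H (@mxd_cst R N _ 0).
  rewrite /EL_rhs => /eqP; rewrite subr_eq0 !mxpowE => /eqP hp.
  exact: (@normal_of_pow _ _ v n hn hp).
- move=> hnorm; exists (fun t => g t *m v); split; first exact: dg.
  move=> t _.
  have -> : (fun s => EL_lhs n (invmx (g s) *m (g s *m v))) = fun _ => EL_lhs n v.
    by apply/funext => s; rewrite vt.
  rewrite vt (_ : EL_rhs n v = 0); first exact: mxd_cst.
  by rewrite /EL_rhs hnorm subrr.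
Qed.
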